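(* Let $M$ be a smooth manifold, let $\nabla$ be an affine connection on $M$ and let $(\hat J_1,\hat J_2,\hat J_3)$ be a generalized almost quaternionic structure on $M$. Then $\hat J_1,\hat J_2,\hat J_3$ are $\nabla$-integrable if and only if the generalized Obata connection $D$ is torsion-free, i.e. $D_\sigma\tau-D_\tau\sigma-[\sigma,\tau]_\nabla=0$ for all $\sigma,\tau$.
   Context: A generalized almost quaternionic structure is a triple of endomorphisms $\hat J_1,\hat J_2,\hat J_3$ of $TM\oplus T^*M$ with $\hat J_i^2=-I$, $\hat J_1\hat J_2=-\hat J_2\hat J_1$, $\hat J_3=\hat J_1\hat J_2$. The $\nabla$-bracket: $[X+\eta,Y+\beta]_\nabla:=[X,Y]+\nabla_X\beta-\nabla_Y\eta$. $N^\nabla_{\hat K}(\sigma,\tau):=[\hat K\sigma,\hat K\tau]_\nabla-\hat K[\hat K\sigma,\tau]_\nabla-\hat K[\sigma,\hat K\tau]_\nabla+\hat K^2[\sigma,\tau]_\nabla$; $\hat K$ is $\nabla$-integrable if $N^\nabla_{\hat K}=0$. The generalized Obata connection is $D_\sigma\tau=\frac1{12}\Big\{\sum_{(\alpha,\beta,\gamma)}\hat J_\alpha([\hat J_\beta\sigma,\hat J_\gamma\tau]_\nabla+[\hat J_\beta\tau,\hat J_\gamma\sigma]_\nabla)+2\sum_{\alpha=1}^3\hat J_\alpha([\hat J_\alpha\sigma,\tau]_\nabla+[\hat J_\alpha\tau,\sigma]_\nabla)-\sum_{\alpha=1}^3N^\nabla_{\hat J_\alpha}(\sigma,\tau)\Big\}+\frac12[\sigma,\tau]_\nabla$,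 $(\alpha,\beta,\gamma)$ over cyclic permutations of $(1,2,3)$. *)

(* Defs.v *)
From HB Require Import structures.
From mathcomp Require Import all_boot all_order all_algebra.
From mathcomp Require Import reals.
Set Implicit Arguments. Unset Strict Implicit. Unset Printing Implicit Defensive.
Import Order.TTheory GRing.Theory Num.Theory.
Local Open Scope ring_scope.

(* Algebraic model of the data on a smooth manifold M:
   - Vect : the real vector space of vector fields on M,
   - Form : the real vector space of 1-forms on M,
   - lie  : the Lie bracket of vector fields (R-bilinear, antisymmetric),
   - nab  : the affine connection acting on 1-forms, (X, b) |-> nabla_X b
            (R-bilinear).
   Sections of TM (+) T*M are pairs (X, eta) : Vect * Form. *)

Section GenGeom.
Variable R : realType.
Variables (Vect Form : lmodType R).

Definition lie_bracket_axioms (lie : Vect -> Vect -> Vect) : Prop :=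
  [/\ forall x y, lie x y = - lie y x,
      forall a x y z, lie (a *: x + y) z = a *: lie x z + lie y z
    & forall a x y z, lie z (a *: x + y) = a *: lie z x + lie z y].

Definition connection_axioms (nab : Vect -> Form -> Form) : Prop :=
  (forall a x y b, nab (a *: x + y) b = a *: nab x b + nab y b) /\
  (forall a x b c, nab x (a *: b + c) = a *: nab x b + nab x c).

Definition Sec := (Vect * Form)%type.

Definition nabla_bracket (lie : Vect -> Vect -> Vect)
    (nab : Vect -> Form -> Form) (s t : Sec) : Sec :=
  (lie s.1 t.1, nab s.1 t.2 - nab t.1 s.2).

Definition gen_almost_quaternionic (J1 J2 J3 : {linear Sec -> Sec}) : Prop :=
  [/\ forall s, J1 (J1 s) = - s,
      forall s, J2 (J2 s) = - s,
      forall s, J3 (J3 s) = - s,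
      forall s, J1 (J2 s) = - J2 (J1 s)
    & forall s, J3 s = J1 (J2 s)].

Variables (lie : Vect -> Vect -> Vect) (nab : Vect -> Form -> Form).
Local Notation br := (nabla_bracket lie nab).

Definition nabla_nijenhuis (K : Sec -> Sec) (s t : Sec) : Sec :=
  br (K s) (K t) - K (br (K s) t) - K (br s (K t)) + K (K (br s t)).

Definition nabla_integrable (K : Sec -> Sec) : Prop :=
  forall s t, nabla_nijenhuis K s t = 0.

Definition obata (J1 J2 J3 : Sec -> Sec) (s t : Sec) : Sec :=
  (12%:R : R)^-1 *:
    ( (J1 (br (J2 s) (J3 t) + br (J2 t) (J3 s))
     + J2 (br (J3 s) (J1 t) + br (J3 t) (J1 s))
     + J3 (br (J1 s) (J2 t) + br (J1 t) (J2 s)))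
    + 2%:R *: (J1 (br (J1 s) t + br (J1 t) s)
              + J2 (br (J2 s) t + br (J2 t) s)
              + J3 (br (J3 s) t + br (J3 t) s))
    - (nabla_nijenhuis J1 s t + nabla_nijenhuis J2 s t
       + nabla_nijenhuis J3 s t))
  + (2%:R : R)^-1 *: br s t.

Definition torsion_free (D : Sec -> Sec -> Sec) : Prop :=
  forall s t, D s t - D t s - br s t = 0.

End GenGeom.

(* Main.v *)
Require Import Defs.
From HB Require Import structures.
From mathcomp Require Import all_boot all_order all_algebra.
From mathcomp Require Import reals.
From mathcomp Require Import ring.
Import Order.TTheory GRing.Theory Num.Theory.
Local Open Scope ring_scope.

Section Refl.
Variable R : comNzRingType.
Variable V : lmodType R.

Inductive zexpr :=
| EVar of nat | EAdd of zexpr & zexpr | EOpp of zexpr | EZero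
| EScale of R & zexpr | EMuln of zexpr & nat.

Fixpoint zeval (env : seq V) (e : zexpr) : V :=
  match e with
  | EVar n => nth 0 env n
  | EAdd a b => zeval env a + zeval env b
  | EOpp a => - zeval env a
  | EZero => 0
  | EScale c a => c *: zeval env a
  | EMuln a n => zeval env a *+ n
  end.

Fixpoint zaddl (l1 l2 : seq R) : seq R :=
  match l1, l2 with
  | x :: l1', y :: l2' => (x + y) :: zaddl l1' l2'
  | [::], l => l
  | l, [::] => l
  end.
Fixpoint zscl (c : R) (l : seq R) : seq R :=
  match l with [::] => [::] | x :: l' => (c * x) :: zscl c l' end.
Fixpoint zvar (n : nat) : seq R :=
  match n with 0%N => [:: 1] | n'.+1 => 0 :: zvar n' end.
Fixpoint znorm (e : zexpr) : seq R :=
  match e with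
  | EVar n => zvar n
  | EAdd a b => zaddl (znorm a) (znorm b)
  | EOpp a => zscl (-1) (znorm a)
  | EZero => [::]
  | EScale c a => zscl c (znorm a)
  | EMuln a n => zscl n%:R (znorm a)
  end.
Fixpoint zevall (env : seq V) (l : seq R) {struct l} : V :=
  match l with
  | c :: l' => match env with v :: env' => c *: v + zevall env' l' | [::] => 0 end
  | [::] => 0
  end.
Fixpoint zallz (l : seq R) : Prop :=
  match l with [::] => True | c :: l' => c = 0 /\ zallz l' end.

Lemma zevall_nil env : zevall env [::] = 0. Proof. by []. Qed.
Lemma zevall_add env l1 l2 : zevall env (zaddl l1 l2) = zevall env l1 + zevall env l2.
Proof.
elim: l1 l2 env => [|x l1 IH] [|y l2] [|v env] /=; rewrite ?addr0 ?add0r //.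
by rewrite IH scalerDl addrACA.
Qed.
Lemma zevall_scl env c l : zevall env (zscl c l) = c *: zevall env l.
Proof.
elim: l env => [|x l IH] [|v env] //=; rewrite ?scaler0 //.
by rewrite IH scalerDr scalerA.
Qed.
Lemma zevall_var env n : zevall env (zvar n) = nth 0 env n.
Proof.
elim: n env => [|n IH] [|v env] //=.
  by rewrite addr0 scale1r.
by rewrite scale0r add0r IH.
Qed.
Lemma zeval_norm env e : zeval env e = zevall env (znorm e).
Proof.
elim: e => [n|a IHa b IHb|a IHa||c a IHa|a IHa n] /=.
- by rewrite zevall_var.
- by rewrite zevall_add IHa IHb.
- by rewrite zevall_scl IHa scaleN1r.
- by [].
- by rewrite zevall_scl IHa.
- by rewrite zevall_scl IHa scaler_nat.
Qed.
Lemma zallz_ok env l : zallz l -> zevall env l = 0.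
Proof.
elim: l env => [|x l IH] [|v env] //= [-> H]; by rewrite scale0r add0r IH.
Qed.
Lemma zrefl_ok env e : zallz (znorm e) -> zeval env e = 0.
Proof. by move=> H; rewrite zeval_norm zallz_ok. Qed.
End Refl.
Arguments EAdd {R}. Arguments EOpp {R}. Arguments EScale {R}. Arguments EMuln {R}.

Ltac zindex t l :=
  match l with
  | cons ?u _ => let r := constr:(ltac:(unify u t; exact 0%N) : nat) in r
  | cons _ ?l' => let n := zindex t l' in constr:(S n)
  end.
Ltac zmem t l :=
  match l with
  | cons ?u _ => let r := constr:(ltac:(unify u t; exact true) : bool) in r
  | cons _ ?l' => zmem t l'
  | _ => constr:(false)
  end.
Ltac zcollect t acc :=
  lazymatch t with
  | @GRing.add _ ?a ?b => let acc := zcollect a acc in zcollect b acc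
  | @GRing.opp _ ?a => zcollect a acc
  | @GRing.zero _ => acc
  | @GRing.scale _ _ _ ?a => zcollect a acc
  | @GRing.natmul _ ?a _ => zcollect a acc
  | _ => let b := zmem t acc in
         lazymatch b with true => acc | false => constr:(cons t acc) end
  end.
Ltac zreify R t l :=
  lazymatch t with
  | @GRing.add _ ?a ?b => let ra := zreify R a l in let rb := zreify R b l in constr:(EAdd ra rb)
  | @GRing.opp _ ?a => let ra := zreify R a l in constr:(EOpp ra)
  | @GRing.zero _ => constr:(EZero R)
  | @GRing.scale _ _ ?c ?a => let ra := zreify R a l in constr:(EScale c ra)
  | @GRing.natmul _ ?a ?n => let ra := zreify R a l in constr:(EMuln ra n)
  | _ => let n := zindex t l in constr:(EVar R n)
  end.
Ltac zsolve R :=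
  lazymatch goal with
  | |- ?t = 0 =>
    let T := type of t in
    let env := zcollect t (@nil T) in
    let e := zreify R t env in
    apply: (@zrefl_ok R _ env e);
    cbv beta iota delta [zallz znorm zaddl zscl zvar]
  end.

Section Main.
Variable R : realType.
Variables (Vect Form : lmodType R).
Variables (lie : Vect -> Vect -> Vect) (nab : Vect -> Form -> Form).
Variables (J1 J2 J3 : {linear Sec Vect Form -> Sec Vect Form}).
Hypothesis Hlie : lie_bracket_axioms lie.
Hypothesis Hnab : connection_axioms nab.
Hypothesis HJ : gen_almost_quaternionic J1 J2 J3.
Local Notation br := (nabla_bracket lie nab).

Lemma lieC x y : lie x y = - lie y x. Proof. by case: Hlie. Qed.
Lemma lie0l z : lie 0 z = 0.
Proof. case: Hlie => _ H _; have := H (-1) z z z. by rewrite !scaleN1r !addNr. Qed.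
Lemma lieNl x z : lie (- x) z = - lie x z.
Proof. case: Hlie => _ H _; have := H (-1) x 0 z. by rewrite addr0 !scaleN1r lie0l addr0. Qed.
Lemma lieDl x y z : lie (x + y) z = lie x z + lie y z.
Proof. case: Hlie => _ H _; have := H 1 x y z. by rewrite !scale1r. Qed.
Lemma lieNr x z : lie z (- x) = - lie z x.
Proof. by rewrite lieC lieNl lieC opprK. Qed.
Lemma lieDr x y z : lie z (x + y) = lie z x + lie z y.
Proof. by rewrite lieC lieDl opprD -!lieC. Qed.
Lemma nab0l z : nab 0 z = 0.
Proof. case: Hnab => H _; have := H (-1) 0 0 z. by rewrite scaler0 add0r !scaleN1r addNr. Qed.
Lemma nabNl x z : nab (- x) z = - nab x z.
Proof. case: Hnab => H _; have := H (-1) x 0 z. by rewrite addr0 !scaleN1r nab0l addr0. Qed.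
Lemma nabDl x y z : nab (x + y) z = nab x z + nab y z.
Proof. case: Hnab => H _; have := H 1 x y z. by rewrite !scale1r. Qed.
Lemma nab0r z : nab z 0 = 0.
Proof. case: Hnab => _ H; have := H (-1) z 0 0. by rewrite scaler0 add0r !scaleN1r addNr. Qed.
Lemma nabNr x z : nab z (- x) = - nab z x.
Proof. case: Hnab => _ H; have := H (-1) z x 0. by rewrite addr0 !scaleN1r nab0r addr0. Qed.
Lemma nabDr x y z : nab z (x + y) = nab z x + nab z y.
Proof. case: Hnab => _ H; have := H 1 z x y. by rewrite !scale1r. Qed.

Lemma brDl x y z : br (x + y) z = br x z + br y z.
Proof.
case: x y z => [x1 x2] [y1 y2] [z1 z2]; rewrite /nabla_bracket /=.
rewrite lieDl nabDl nabDr; congr (_, _).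
by rewrite opprD addrACA.
Qed.
Lemma brNl x z : br (- x) z = - br x z.
Proof.
case: x z => [x1 x2] [z1 z2]; rewrite /nabla_bracket /=.
by rewrite lieNl nabNl nabNr; congr (_, _); rewrite opprD.
Qed.
Lemma brC x y : br x y = - br y x.
Proof.
case: x y => [x1 x2] [y1 y2]; rewrite /nabla_bracket /=.
by rewrite lieC; congr (_, _); rewrite opprB.
Qed.
Lemma brNr x z : br z (- x) = - br z x.
Proof. by rewrite brC brNl brC opprK. Qed.
Lemma brDr x y z : br z (x + y) = br z x + br z y.
Proof. by rewrite brC brDl opprD -!brC. Qed.

Lemma J11 x : J1 (J1 x) = - x. Proof. by case: HJ. Qed.
Lemma J22 x : J2 (J2 x) = - x. Proof. by case: HJ. Qed.
Lemma J33 x : J3 (J3 x) = - x. Proof. by case: HJ. Qed.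
Lemma J12 x : J1 (J2 x) = J3 x. Proof. by case: HJ. Qed.
Lemma J21 x : J2 (J1 x) = - J3 x.
Proof. case: HJ => _ _ _ H ->; by rewrite H opprK. Qed.
Lemma J13 x : J1 (J3 x) = - J2 x.
Proof. by rewrite -J12 J11. Qed.
Lemma J31 x : J3 (J1 x) = J2 x.
Proof. by rewrite -J12 J21 linearN J13 opprK. Qed.
Lemma J32 x : J3 (J2 x) = - J1 x.
Proof. by rewrite -J12 J22 linearN. Qed.
Lemma J23 x : J2 (J3 x) = J1 x.
Proof. by rewrite -J12 J21 J32 opprK. Qed.

Lemma J1D x y : J1 (x + y) = J1 x + J1 y. Proof. exact: linearD. Qed.
Lemma J2D x y : J2 (x + y) = J2 x + J2 y. Proof. exact: linearD. Qed.
Lemma J3D x y : J3 (x + y) = J3 x + J3 y. Proof. exact: linearD. Qed.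
Lemma J1N x : J1 (- x) = - J1 x. Proof. exact: linearN. Qed.
Lemma J2N x : J2 (- x) = - J2 x. Proof. exact: linearN. Qed.
Lemma J3N x : J3 (- x) = - J3 x. Proof. exact: linearN. Qed.

Definition NN (K : Sec Vect Form -> Sec Vect Form) := nabla_nijenhuis lie nab K.
Definition SS s t := NN J1 s t + NN J2 s t + NN J3 s t.
Definition Phi (K : Sec Vect Form -> Sec Vect Form) s t :=
  SS (K s) (K t) - K (SS (K s) t) - K (SS s (K t)) - SS s t.

Ltac normJ := rewrite /Phi /SS /NN /nabla_nijenhuis;
  rewrite ?(opprD, scalerDr, J1D, J2D, J3D, brDl, brDr);
  rewrite ?(opprK, scalerN, J1N, J2N, J3N, brNl, brNr, J11, J22, J33, J12, J21, J13, J31, J23, J32).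

Lemma key1 s t : NN J1 s t *+ 6 + Phi J1 s t = 0.
Proof using Hlie Hnab HJ. normJ. zsolve R. repeat split; ring. Qed.

Lemma key2 s t : NN J2 s t *+ 6 + Phi J2 s t = 0.
Proof using Hlie Hnab HJ. normJ. zsolve R. repeat split; ring. Qed.
Lemma key3 s t : NN J3 s t *+ 6 + Phi J3 s t = 0.
Proof using Hlie Hnab HJ. normJ. zsolve R. repeat split; ring. Qed.

Lemma tors s t : obata lie nab J1 J2 J3 s t - obata lie nab J1 J2 J3 t s - br s t
   + (6%:R)^-1 *: SS s t = 0.
Proof using Hlie Hnab HJ.
rewrite /obata; normJ.
have C1 : br t s = - br s t by rewrite brC.
have C2 : forall f : {linear Sec Vect Form -> Sec Vect Form}, br (f t) s = - br s (f t).
  by move=> f; rewrite brC.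
have C3 : forall f : {linear Sec Vect Form -> Sec Vect Form}, br t (f s) = - br (f s) t.
  by move=> f; rewrite brC.
have C4 : forall f g : {linear Sec Vect Form -> Sec Vect Form}, br (f t) (g s) = - br (g s) (f t).
  by move=> f g; rewrite brC.
rewrite ?C1 ?C2 ?C3 ?C4.
rewrite ?(opprK, opprD, scalerDr, scalerN, J1D, J2D, J3D, J1N, J2N, J3N).
zsolve R. repeat split; try field; done.
Qed.
End Main.

Theorem corollary5p9 (R : realType) (Vect Form : lmodType R)
  (lie : Vect -> Vect -> Vect) (nab : Vect -> Form -> Form)
  (J1 J2 J3 : {linear Sec Vect Form -> Sec Vect Form}) :
  lie_bracket_axioms lie ->
  connection_axioms nab ->
  gen_almost_quaternionic J1 J2 J3 ->
  ([/\ nabla_integrable lie nab J1, nabla_integrable lie nab J2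
     & nabla_integrable lie nab J3]
   <-> torsion_free lie nab (obata lie nab J1 J2 J3)).
Proof.
move=> Hl Hn Hq; split.
- case=> I1 I2 I3 s t.
  have := @tors R Vect Form lie nab J1 J2 J3 Hl Hn Hq s t.
  by rewrite /SS /NN I1 I2 I3 !addr0 scaler0 addr0.
- move=> T.
  have HS : forall s t, @SS R Vect Form lie nab J1 J2 J3 s t = 0.
    move=> s t; have := @tors R Vect Form lie nab J1 J2 J3 Hl Hn Hq s t.
    rewrite T add0r => /eqP; rewrite scaler_eq0 invr_eq0 pnatr_eq0 /=.
    by move/eqP.
  have K : forall N : Sec Vect Form, N *+ 6 = 0 -> N = 0.
    move=> N /eqP; rewrite -scaler_nat scaler_eq0 pnatr_eq0 /=.
    by move/eqP.
  split=> s t.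
  + have := @key1 R Vect Form lie nab J1 J2 J3 Hl Hn Hq s t.
    rewrite /Phi !HS !linear0 !addr0; exact: K.
  + have := @key2 R Vect Form lie nab J1 J2 J3 Hl Hn Hq s t.
    rewrite /Phi !HS !linear0 !addr0; exact: K.
  + have := @key3 R Vect Form lie nab J1 J2 J3 Hl Hn Hq s t.
    rewrite /Phi !HS !linear0 !addr0; exact: K.
Qed.
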